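(* Let $n$ be a positive odd integer and let $s$ be an integer with $0\leqslant s\leqslant (n-1)/2$. Then $$ \sum_{k=0}^{(n-1)/2}\frac{(aq;q^2)_k\,(q/a;q^2)_{k+s}}{(q^2;q^2)_k\,(q^2;q^2)_{k+s} } \equiv (-1)^{(n-1)/2}q^{(1-n^2)/4}\pmod{(1-aq^n)(a-q^n)}. $$
   Context: $a,q$ are indeterminates. The $q$-shifted factorial is $(y;q)_0=1$ and $(y;q)_m=(1-y)(1-yq)\cdots(1-yq^{m-1})$ for $m\geqslant1$. For rational functions $A,B$ and a polynomial $P$, $A\equiv B\pmod P$ means $A-B=P\cdot C/D$ for polynomials $C,D$ with $D$ coprime to $P$. *)

(* Defs.v *)
From HB Require Import structures.
From mathcomp Require Import all_boot all_order all_algebra fraction.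
Set Implicit Arguments. Unset Strict Implicit. Unset Printing Implicit Defensive.
Import Order.TTheory GRing.Theory Num.Theory.
Local Open Scope ring_scope.

(* Bivariate polynomial ring Q[a,q] as {poly {poly rat}}:
   q is the inner variable, a is the outer variable. *)
Definition Pol := {poly {poly rat}}.
Definition RatF := {fraction Pol}.

Definition qvar : Pol := 'X%:P.
Definition avar : Pol := 'X.

Definition qA : RatF := tofrac qvar.
Definition aA : RatF := tofrac avar.

Definition qpoch (R : pzRingType) (y q : R) (m : nat) : R :=
  \prod_(i < m) (1 - y * q ^+ i).

Definition pdvd (g p : Pol) : Prop := exists h : Pol, p = g * h.
Definition pcoprime (p d : Pol) : Prop :=
  forall g : Pol, pdvd g p -> pdvd g d -> g \is a GRing.unit.

Definition congr_mod (A B : RatF) (P : Pol) : Prop :=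
  exists C D : Pol, D != 0 /\ pcoprime P D /\ A - B = tofrac (P * C) / tofrac D.

(* Main.v *)
Require Import Defs.
From HB Require Import structures.
From mathcomp Require Import all_boot all_order all_algebra fraction.
From mathcomp Require Import ring zify.
Import Order.TTheory GRing.Theory Num.Theory.
Set Implicit Arguments. Unset Strict Implicit. Unset Printing Implicit Defensive.
Local Open Scope ring_scope.

Definition pR (R : pzRingType) (y p : R) (lo hi : nat) : R :=
  \prod_(lo <= i < hi) (1 - y * p ^+ i).

Lemma qpochS (R : pzRingType) (y p : R) k :
  qpoch y p k.+1 = qpoch y p k * (1 - y * p ^+ k).
Proof. by rewrite /qpoch big_ord_recr. Qed.

Lemma qpoch_split (R : pzRingType) (y p : R) k m : (k <= m)%N ->
  qpoch y p m = qpoch y p k * pR y p k m.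
Proof.
move=> km; rewrite /qpoch /pR.
rewrite -(big_mkord xpredT (fun i => 1 - y * p ^+ i)) -(big_mkord xpredT (fun i => 1 - y * p ^+ i)).
by rewrite (big_cat_nat (leq0n k) km).
Qed.

Section Core.
Variable F : fieldType.
Variable p : F.
Hypothesis p0 : p != 0.
Hypothesis hp : forall i, (0 < i)%N -> p ^+ i != 1.

Lemma qpp_neq0 k : qpoch p p k != 0.
Proof.
rewrite /qpoch; apply/prodf_neq0 => i _.
by rewrite -exprS subr_eq0 eq_sym hp.
Qed.

Definition tt (x y : F) s k :=
  qpoch x p k * qpoch y p (k + s) / (qpoch p p k * qpoch p p (k + s)).

Lemma tstep x y s m : x * y = p -> x != 0 -> x - p ^+ s.+1 != 0 ->
  tt x y s m.+1 = 0 ->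
  \sum_(k < m.+1) tt x y s k = \sum_(k < m.+1) tt x y s.+1 k.
Proof.
move=> xy x0 xs hm.
pose al := p ^+ s.+1 / (x - p ^+ s.+1).
pose G k := al * (1 - p ^+ k) * tt x y s k.
have step : forall k, tt x y s k - tt x y s.+1 k = G k.+1 - G k.
  move=> k; rewrite /G /tt addnS addSn !qpochS.
  have y_def : y = p / x by rewrite -xy [x * y]mulrC mulfK.
  have P1 := qpp_neq0 k; have P2 := qpp_neq0 (k + s).
  have h1 : 1 - p * p ^+ k != 0 by rewrite -exprS subr_eq0 eq_sym hp.
  have h2 : 1 - p * p ^+ (k + s) != 0 by rewrite -exprS subr_eq0 eq_sym hp.
  rewrite exprD exprS in h2 *.
  rewrite /al exprS in xs *.
  rewrite y_def.
  set X := qpoch x p k. set Y := qpoch (p / x) p (k + s).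
  set Q1 := qpoch p p k. set Q2 := qpoch p p (k + s).
  set z := p ^+ k. set w := p ^+ s.
  move: P1 P2 h1 h2 xs; rewrite -/Q1 -/Q2 -/z -/w.
  generalize X Y Q1 Q2 z w.
  move=> X' Y' P1' P2' z' w' hP1 hP2 h1 h2 xs'.
  field.
  by rewrite hP1 hP2 h1 h2 xs' x0.
have : \sum_(k < m.+1) (tt x y s k - tt x y s.+1 k) = 0.
  rewrite (eq_bigr (fun k : 'I_m.+1 => G k.+1 - G k)); last by move=> k _; apply: step.
  rewrite -(big_mkord xpredT (fun k => G k.+1 - G k)) telescope_sumr // /G hm expr0 subrr.
  by rewrite !mulr0 mul0r subr0.
by rewrite sumrB => /eqP; rewrite subr_eq0 => /eqP.
Qed.

Lemma qpoch_zero (y : F) n j : (n < j)%N -> y * p ^+ n = 1 -> qpoch y p j = 0.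
Proof.
move=> nj h; rewrite (qpoch_split _ _ nj) qpochS h subrr.
by rewrite mulr0 mul0r.
Qed.

Lemma qpoch0 (y : F) : qpoch y p 0 = 1.
Proof. by rewrite /qpoch big_ord0. Qed.

Definition V m := \prod_(i < m) - (p ^+ i.+1)^-1.

Lemma base m : qpoch (p ^+ m)^-1 p m = V m * qpoch p p m.
Proof.
rewrite /qpoch /V -big_split /=.
rewrite -(big_mkord xpredT (fun i => 1 - (p ^+ m)^-1 * p ^+ i)) big_nat_rev /= big_mkord.
apply: eq_bigr => i _; rewrite add0n.
have -> : p ^+ m = p ^+ (m - i.+1) * p ^+ i.+1 by rewrite -exprD subnK.
have h1 : p ^+ (m - i.+1) != 0 by apply: expf_neq0.
have h2 : p ^+ i != 0 by apply: expf_neq0.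
rewrite exprS; field.
by rewrite h1 h2 p0.
Qed.

Lemma neq_pow i j : (i < j)%N -> p ^+ j != p ^+ i.
Proof.
move=> ij; rewrite -(subnK (ltnW ij)) exprD; apply/negP => /eqP h.
have : p ^+ (j - i) = 1.
  by apply: (mulIf (expf_neq0 i p0)); rewrite mul1r.
by apply/eqP; apply: hp; rewrite subn_gt0.
Qed.

Lemma I1 m s : (s <= m)%N ->
  \sum_(k < m.+1) tt (p ^+ m.+1) (p ^+ m)^-1 s k = V m.
Proof.
have pm0 : p ^+ m != 0 by apply: expf_neq0.
have xy : p ^+ m.+1 * (p ^+ m)^-1 = p by rewrite exprS -mulrA mulfV // mulr1.
have yz : forall j, (m < j)%N -> qpoch (p ^+ m)^-1 p j = 0.
  by move=> j mj; apply: (qpoch_zero mj); rewrite mulVf.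
move=> sm; rewrite -(subKn sm).
elim: (m - s)%N (leq_subr s m) => [|d IH] dm.
  rewrite subn0 big_ord_recl big1 ?addr0.
    by rewrite /tt !qpoch0 add0n base mul1r mul1r mulfK // qpp_neq0.
  move=> k _; rewrite /tt (yz (bump 0 k + m)%N) ?mulr0 ?mul0r //.
  by rewrite /bump /= add1n addSn ltnS leq_addl.
rewrite -IH ?(ltnW dm) //.
have -> : (m - d)%N = (m - d.+1).+1 by rewrite subnSK.
apply: tstep => //.
- by apply: expf_neq0.
- by rewrite subr_eq0 neq_pow //; lia.
- rewrite /tt yz ?mulr0 ?mul0r //.
  by rewrite addSn ltnS leq_addr.
Qed.

Lemma I2 m s : \sum_(k < m.+1) tt (p ^+ m)^-1 (p ^+ m.+1) s k = V m.
Proof.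
have pm0 : p ^+ m != 0 by apply: expf_neq0.
have xy : (p ^+ m)^-1 * p ^+ m.+1 = p by rewrite exprS mulrCA mulVf // mulr1.
elim: s => [|s IH].
  rewrite -(I1 (leq0n m)); apply: eq_bigr => k _.
  by rewrite /tt addn0 [qpoch (p ^+ m)^-1 p k * _]mulrC.
rewrite -IH; symmetry; apply: tstep => //.
- by rewrite invr_eq0.
- rewrite subr_eq0; apply/negP => /eqP h.
  have : p ^+ (s.+1 + m) = 1 by rewrite exprD -h mulVf.
  by apply/eqP; apply: hp; rewrite addSn.
- rewrite /tt (qpoch_zero (n := m)) ?mul0r // mulVf //.
Qed.
End Core.

Definition Eq (R : pzRingType) m s (q : R) : R :=
  q ^+ (m * m.+1) * qpoch (q ^+ 2) (q ^+ 2) m * qpoch (q ^+ 2) (q ^+ 2) (m + s).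
Definition Dgen (R : pzRingType) m s (a q : R) : R := a ^+ (m + s) * Eq m s q.
Definition Tk (R : pzRingType) m s (a q : R) k : R :=
  qpoch (a * q) (q ^+ 2) k * \prod_(i < k + s) (a - q * (q ^+ 2) ^+ i)
  * pR (q ^+ 2) (q ^+ 2) k m * pR (q ^+ 2) (q ^+ 2) (k + s) (m + s)
  * a ^+ (m - k) * q ^+ (m * m.+1).
Definition Ngen (R : pzRingType) m s (a q : R) : R :=
  \sum_(k < m.+1) Tk m s a q k
  - (-1) ^+ m * a ^+ (m + s) * qpoch (q ^+ 2) (q ^+ 2) m * qpoch (q ^+ 2) (q ^+ 2) (m + s).

Section Morph.
Variables (R S : pzRingType) (f : {rmorphism R -> S}).
Lemma qpochM y p k : f (qpoch y p k) = qpoch (f y) (f p) k.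
Proof.
rewrite /qpoch rmorph_prod; apply: eq_bigr => i _.
by rewrite rmorphB rmorph1 rmorphM rmorphXn.
Qed.
Lemma pRM y p k m : f (pR y p k m) = pR (f y) (f p) k m.
Proof.
rewrite /pR rmorph_prod; apply: eq_bigr => i _.
by rewrite rmorphB rmorph1 rmorphM rmorphXn.
Qed.
Lemma EqM m s q : f (Eq m s q) = Eq m s (f q).
Proof. by rewrite /Eq !rmorphM !qpochM !rmorphXn. Qed.
Lemma DgenM m s a q : f (Dgen m s a q) = Dgen m s (f a) (f q).
Proof. by rewrite /Dgen rmorphM rmorphXn EqM. Qed.
Lemma NgenM m s a q : f (Ngen m s a q) = Ngen m s (f a) (f q).
Proof.
rewrite /Ngen rmorphB rmorph_sum !rmorphM !qpochM !rmorphXn rmorphN rmorph1.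
congr (_ - _); apply: eq_bigr => k _.
rewrite /Tk !rmorphM !qpochM !pRM !rmorphXn !rmorphM rmorph_prod; congr (_ * _ * _ * _ * _ * _).
by apply: eq_bigr => i _; rewrite rmorphB rmorphM !rmorphXn.
Qed.
End Morph.

Section Gen.
Variable F : fieldType.
Variables (a q : F).
Hypothesis a0 : a != 0.
Hypothesis q0 : q != 0.
Hypothesis hq : forall i, (0 < i)%N -> q ^+ i != 1.

Lemma hp2 : forall i, (0 < i)%N -> (q ^+ 2) ^+ i != 1.
Proof. by move=> i i0; rewrite -exprM hq // muln_gt0 i0. Qed.

Lemma aqpoch j : a ^+ j * qpoch (q / a) (q ^+ 2) j = \prod_(i < j) (a - q * (q ^+ 2) ^+ i).
Proof.
elim: j => [|j IH]; first by rewrite /qpoch !big_ord0 mulr1.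
rewrite qpochS big_ord_recr /= -IH exprS.
move: (a ^+ j) (qpoch (q / a) (q ^+ 2) j) => A Q.
by field.
Qed.

Lemma Nid m s :
  Ngen m s a q = Dgen m s a q *
   (\sum_(k < m.+1) tt (q ^+ 2) (a * q) (q / a) s k - (-1) ^+ m * (q ^+ (m * m.+1))^-1).
Proof.
have P0 := qpp_neq0 hp2.
rewrite mulrBr mulr_sumr /Ngen; congr (_ - _).
  apply: eq_bigr => k _.
  have km : (k <= m)%N by rewrite -ltnS.
  have ksm : (k + s <= m + s)%N by rewrite leq_add2r.
  rewrite /Tk /Dgen /Eq /tt (qpoch_split _ _ km) (qpoch_split _ _ ksm).
  have -> : a ^+ (m + s) = a ^+ (k + s) * a ^+ (m - k).
    by rewrite -exprD; congr (_ ^+ _); lia.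
  rewrite -aqpoch.
  have h1 := P0 k; have h2 := P0 (k + s)%N.
  have h3 : a ^+ (k + s)%N != 0 by apply: expf_neq0.
  set X := qpoch (q ^+ 2) (q ^+ 2) k in h1 *.
  set Y := qpoch (q ^+ 2) (q ^+ 2) (k + s)%N in h2 *.
  set Z := a ^+ (k + s)%N in h3 *.
  set W := a ^+ (m - k). set Q := q ^+ (m * m.+1).
  set A1 := qpoch (a * q) (q ^+ 2) k. set A2 := qpoch (q / a) (q ^+ 2) (k + s)%N.
  set R1 := pR (q ^+ 2) (q ^+ 2) k m. set R2 := pR (q ^+ 2) (q ^+ 2) (k + s)%N (m + s).
  clearbody X Y Z W Q A1 A2 R1 R2.
  by field; rewrite ?h1 ?h2 ?h3.
rewrite /Dgen /Eq.
have h := expf_neq0 (m * m.+1) q0.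
set Q := q ^+ (m * m.+1) in h *. set W := a ^+ (m + s).
set X := qpoch (q ^+ 2) (q ^+ 2) m. set Y := qpoch (q ^+ 2) (q ^+ 2) (m + s).
set E := (-1) ^+ m. clearbody Q W X Y E.
by field.
Qed.
End Gen.

Lemma Eq_neq0 (F : fieldType) (q : F) m s : q != 0 ->
  (forall i, (0 < i)%N -> q ^+ i != 1) -> Eq m s q != 0.
Proof.
move=> q0 hq; have P0 := qpp_neq0 (hp2 hq).
by rewrite /Eq !mulf_neq0 ?expf_neq0.
Qed.

Lemma Dgen_neq0 (F : fieldType) (a q : F) m s : a != 0 -> q != 0 ->
  (forall i, (0 < i)%N -> q ^+ i != 1) -> Dgen m s a q != 0.
Proof. by move=> a0 q0 hq; rewrite /Dgen mulf_neq0 ?expf_neq0 ?Eq_neq0. Qed.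

Lemma Vq (F : fieldType) (q : F) m : q != 0 ->
  V (q ^+ 2) m = (-1) ^+ m * (q ^+ (m * m.+1))^-1.
Proof.
move=> q0; elim: m => [|m IH]; first by rewrite /V big_ord0 expr0 mul1r invr1.
rewrite /V big_ord_recr /= -/(V _ m) IH.
have -> : (m.+1 * m.+2 = m * m.+1 + 2 * m.+1)%N by lia.
rewrite exprD (exprM q 2 m.+1) [(-1) ^+ m.+1]exprS.
have h1 := expf_neq0 (m * m.+1) q0; have h2 := expf_neq0 m.+1 (expf_neq0 2 q0).
move: h1 h2; set A := q ^+ (m * m.+1); set B := (q ^+ 2) ^+ m.+1.
clearbody A B => h1 h2.
by field; rewrite h1 h2.
Qed.


Lemma Ngen_root1 (F : fieldType) (x : F) m s n : x != 0 ->
  (forall i, (0 < i)%N -> x ^+ i != 1) -> n = m.*2.+1 -> (s <= m)%N ->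
  Ngen m s (x ^+ n) x = 0.
Proof.
move=> x0 hx hn sm.
have xn0 : x ^+ n != 0 by apply: expf_neq0.
rewrite (Nid xn0 x0 hx).
have e1 : x ^+ n * x = (x ^+ 2) ^+ m.+1.
  by rewrite hn -exprM -exprSr; congr (_ ^+ _); lia.
have e2 : x / x ^+ n = ((x ^+ 2) ^+ m)^-1.
  have -> : x ^+ n = x ^+ m.*2 * x by rewrite hn exprSr.
  have -> : (x ^+ 2) ^+ m = x ^+ m.*2 by rewrite -exprM mul2n.
  have h := expf_neq0 (m.*2) x0; move: h; set A := x ^+ m.*2; clearbody A => h.
  by field; rewrite h x0.
rewrite e1 e2 (I1 (expf_neq0 2 x0) (hp2 hx) sm) Vq //.
by rewrite subrr mulr0.
Qed.

Lemma Ngen_root2 (F : fieldType) (x : F) m s n : x != 0 ->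
  (forall i, (0 < i)%N -> x ^+ i != 1) -> n = m.*2.+1 ->
  Ngen m s (x ^+ n)^-1 x = 0.
Proof.
move=> x0 hx hn.
have xn0 : (x ^+ n)^-1 != 0 by rewrite invr_eq0 expf_neq0.
rewrite (Nid xn0 x0 hx).
have e1 : (x ^+ n)^-1 * x = ((x ^+ 2) ^+ m)^-1.
  have -> : x ^+ n = x ^+ m.*2 * x by rewrite hn exprSr.
  have -> : (x ^+ 2) ^+ m = x ^+ m.*2 by rewrite -exprM mul2n.
  have h := expf_neq0 (m.*2) x0; move: h; set A := x ^+ m.*2; clearbody A => h.
  by field; rewrite h x0.
have e2 : x / (x ^+ n)^-1 = (x ^+ 2) ^+ m.+1.
  by rewrite invrK hn -exprM -exprS; congr (_ ^+ _); lia.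
rewrite e1 e2 (I2 (expf_neq0 2 x0) (hp2 hx)) Vq //.
by rewrite subrr mulr0.
Qed.

Lemma cop n j (w : {poly rat}) : w != 0 ->
  pcoprime ((1 - avar * qvar ^+ n) * (avar - qvar ^+ n)) (avar ^+ j * w%:P).
Proof.
move=> w0 g [h1 e1] [h2 e2].
set c : {poly rat} := 'X ^+ n.
have c0 : c != 0 by rewrite expf_neq0 // polyX_eq0.
have qc : qvar ^+ n = c%:P by rewrite /qvar /c rmorphXn.
move: e1; rewrite qc; set P := (1 - avar * c%:P) * (avar - c%:P) => e1.
set X := 1 + c%:P ^+ 2 - avar * c%:P.
have PX : P + c%:P = avar * X by rewrite /P /X; ring.
set S := \sum_(i < j) (P + c%:P) ^+ (j.-1 - i) * c%:P ^+ i.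
have E := subrXX (P + c%:P) (c%:P) j; rewrite addrK -/S in E.
have Ec : c%:P ^+ j = (P + c%:P) ^+ j - P * S by rewrite -E opprB addrC subrK.
have key : (c ^+ j * w)%:P = g * (X ^+ j * h2 - h1 * S * w%:P).
  rewrite rmorphM rmorphXn Ec PX exprMn.
  have -> : (avar ^+ j * X ^+ j - P * S) * w%:P = X ^+ j * (avar ^+ j * w%:P) - P * S * w%:P by ring.
  rewrite e2 e1; ring.
have cw0 : c ^+ j * w != 0 by rewrite mulf_neq0 // expf_neq0.
have g0 : g != 0.
  by apply: contraNneq cw0 => g0; move: key; rewrite g0 mul0r => /eqP; rewrite polyC_eq0.
set H := X ^+ j * h2 - h1 * S * w%:P in key.
have H0 : H != 0.
  by apply: contraNneq cw0 => H0; move: key; rewrite H0 mulr0 => /eqP; rewrite polyC_eq0.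
have sg : size g = 1%N.
  have := size_mul g0 H0; rewrite -key size_polyC cw0 /=.
  have := size_poly_gt0 g; have := size_poly_gt0 H; rewrite g0 H0 => A B C.
  move: C A B; case: (size g) => [|[|k]] //; case: (size H) => [|l] //.
  move=> C; exfalso; move: C; rewrite !addSn addnS /=. by [].
have gC := size1_polyC (eq_leq sg).
set g0' := g`_0 in gC.
have EP : forall x, P.[x] = g0' * h1.[x] by move=> x; rewrite e1 gC hornerCM.
have P0 : P.[0] = - c by rewrite /P !hornerE; ring.
have P1 : P.[1] = (1 - c) * (1 - c) by rewrite /P !hornerE; ring.
have u : g0' * (h1.[1] - h1.[0] * (2%:R - c)) = 1.
  rewrite mulrBr mulrA -!EP P0 P1; ring.
rewrite gC; apply/unitrPr; exists (h1.[1] - h1.[0] * (2%:R - c))%:P.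
by rewrite -rmorphM u.
Qed.

Lemma Xn_neq1 i : (0 < i)%N -> ('X ^+ i : {poly rat}) != 1.
Proof.
move=> i0; apply/eqP => h; have := congr1 (fun p : {poly rat} => size p) h => /=.
by rewrite size_polyXn size_poly1; case: i i0 h.
Qed.

Lemma odd_eq n : (0 < n)%N -> odd n -> n = ((n.-1)./2).*2.+1.
Proof.
case: n => // n' _ /= ho.
by have := odd_double_half n'; rewrite (negbTE ho) add0n => ->.
Qed.

Lemma NgenM2 (R S : pzRingType) (f : {rmorphism R -> S}) (g : R -> S) m s a q :
  (forall x, f x = g x) -> g (Ngen m s a q) = Ngen m s (g a) (g q).
Proof. by move=> E; rewrite -!E NgenM. Qed.

Section FR.
Variables (R S : pzRingType) (f : {rmorphism R -> S}) (g : R -> S).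
Hypothesis E : forall x, f x = g x.
Lemma gM a b : g (a * b) = g a * g b. Proof. by rewrite -!E rmorphM. Qed.
Lemma gB a b : g (a - b) = g a - g b. Proof. by rewrite -!E rmorphB. Qed.
Lemma g1 : g 1 = 1. Proof. by rewrite -E rmorph1. Qed.
End FR.

Lemma EqM2 (R S : pzRingType) (f : {rmorphism R -> S}) (g : R -> S) m s q :
  (forall x, f x = g x) -> g (Eq m s q) = Eq m s (g q).
Proof. by move=> E; rewrite -!E EqM. Qed.

Theorem theorem4p4 (n s : nat) :
  (0 < n)%N -> odd n -> (s <= (n.-1)./2)%N ->
  congr_mod
    (\sum_(k < ((n.-1)./2).+1)
        (qpoch (aA * qA) (qA ^+ 2) k * qpoch (qA / aA) (qA ^+ 2) (k + s))
        / (qpoch (qA ^+ 2) (qA ^+ 2) k * qpoch (qA ^+ 2) (qA ^+ 2) (k + s)))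
    ((-1) ^+ ((n.-1)./2) * qA ^- ((n ^ 2 - 1) %/ 4))
    ((1 - avar * qvar ^+ n) * (avar - qvar ^+ n)).
Proof.
move=> n0 nodd sm.
have hn := odd_eq n0 nodd.
set m := (n.-1)./2 in sm hn *.
have e4 : ((n ^ 2 - 1) %/ 4 = m * m.+1)%N.
  have -> : (n ^ 2 - 1 = 4 * (m * m.+1))%N by rewrite hn -mul2n; lia.
  by rewrite mulKn.
rewrite e4; clearbody m; clear e4.
pose x : {fraction {poly rat}} := tofrac 'X.
have x0 : x != 0 by rewrite tofrac_eq0 polyX_eq0.
have hx : forall i, (0 < i)%N -> x ^+ i != 1.
  by move=> i i0; rewrite -tofracXn -tofrac1 tofrac_eq Xn_neq1.
have aA0 : aA != 0 by rewrite tofrac_eq0 polyX_eq0.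
have qA0 : qA != 0 by rewrite tofrac_eq0 /qvar polyC_eq0 polyX_eq0.
have hqA : forall i, (0 < i)%N -> qA ^+ i != 1.
  move=> i i0; rewrite -tofracXn -tofrac1 tofrac_eq /qvar -rmorphXn /=.
  by rewrite -polyC1 (inj_eq polyC_inj) Xn_neq1.
set N := Ngen m s avar qvar. set D := Dgen m s avar qvar.
have tN : tofrac N = Ngen m s aA qA by rewrite /N (NgenM (@tofrac Pol)).
have tD : tofrac D = Dgen m s aA qA by rewrite /D (DgenM (@tofrac Pol)).
have D0 : tofrac D != 0 by rewrite tD; exact: Dgen_neq0 aA0 qA0 hqA.
have Hd : tofrac N / tofrac D =
   \sum_(k < m.+1) tt (qA ^+ 2) (aA * qA) (qA / aA) s k - (-1) ^+ m / qA ^+ (m * m.+1).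
  by rewrite tN (Nid aA0 qA0 hqA) -tD mulrC mulKf.
set c : {poly rat} := 'X ^+ n.
have qc : qvar ^+ n = c%:P by rewrite /qvar /c rmorphXn.
have NA : N.[c] = 0.
  rewrite /N (@NgenM2 _ _ (horner_eval c) (fun p => p.[c])) ?hornerX /qvar ?hornerC; last by [].
  apply/eqP; rewrite -tofrac_eq0.
  rewrite (@NgenM2 _ _ (@tofrac {poly rat}) (@tofrac {poly rat})) // /c tofracXn.
  by rewrite (Ngen_root1 x0 hx hn sm).
pose y := (x ^+ n)^-1.
have NB : (map_poly (@tofrac {poly rat}) N).[y] = 0.
  rewrite /N (@NgenM2 _ _ (map_poly (@tofrac {poly rat})) (map_poly (@tofrac {poly rat}))) //.
  rewrite (@NgenM2 _ _ (horner_eval y) (fun p => p.[y])); last by [].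
  rewrite map_polyX hornerX /qvar map_polyC hornerC.
  by rewrite (@Ngen_root2 _ x m s n x0 hx hn).
have xn0 : x ^+ n != 0 by apply: expf_neq0.
have tc : tofrac c = x ^+ n by rewrite /c tofracXn.
rewrite qc.
set P := (1 - avar * c%:P) * (avar - c%:P).
have Pc : P.[c] = 0 by rewrite /P !hornerE; ring.
pose mp := map_poly (@tofrac {poly rat}).
have hmp : forall z, mp z = mp z by [].
have mM := @gM _ _ mp mp hmp; have mB := @gB _ _ mp mp hmp; have m1 := @g1 _ _ mp mp hmp.
have Py : (map_poly (@tofrac {poly rat}) P).[y] = 0.
  rewrite -/mp /P /avar !(mM, mB, m1) /mp map_polyX map_polyC /= !hornerE tc /y mulVf //.
  by rewrite subrr mul0r.
have c0 : c != 0 by rewrite expf_neq0 // polyX_eq0.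
have P0 : P != 0.
  apply/eqP => h; have := congr1 (fun p => p.[0]) h; rewrite /P !hornerE /=.
  by rewrite subr0 mul1r => /eqP; rewrite oppr_eq0 (negbTE c0).
have sP : (size P <= 3)%N.
  have e : 1 - avar * c%:P = (- c)%:P * 'X + 1%:P by rewrite /avar polyCN polyC1; ring.
  rewrite /P (leq_trans (size_mul_leq _ _)) // e size_MXaddC size_XsubC.
  case: ifP => // _; rewrite size_polyC; by case: (_ != 0).
have hr := Pdiv.Idomain.divp_eq N P.
set cc := lead_coef P ^+ _ in hr. set Q := N %/ P in hr. set r := N %% P in hr.
have sr : (size r <= 2)%N.
  have := ltn_modp N P; rewrite P0 => h; exact: (leq_trans h sP).
have rdef : r = cc *: N - Q * P by rewrite hr addrAC subrr add0r.
have rc : r.[c] = 0 by rewrite rdef hornerD hornerN hornerZ hornerM NA Pc !mulr0 subr0.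
have ry : (map_poly (@tofrac {poly rat}) r).[y] = 0.
  rewrite -/mp in NB Py *; rewrite rdef -mul_polyC mB (mM (cc%:P) N) (mM Q P).
  by rewrite hornerD hornerN !hornerM NB Py !mulr0 subr0.
have e1 : r`_0 + r`_1 * c = 0.
  rewrite -[RHS]rc (horner_coef_wide c sr) !big_ord_recr big_ord0 /=.
  by rewrite add0r expr0 mulr1 expr1.
have smr : (size (map_poly (@tofrac {poly rat}) r) <= 2)%N.
  rewrite size_map_inj_poly //; move=> a b /eqP; rewrite tofrac_eq => /eqP //.
have e2 : tofrac r`_0 + tofrac r`_1 * y = 0.
  rewrite -[RHS]ry (horner_coef_wide y smr) !big_ord_recr big_ord0 /= !coef_map /=.
  by rewrite add0r expr0 mulr1 expr1.
have e3 : r`_0 * c + r`_1 = 0.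
  apply/eqP; rewrite -tofrac_eq0 tofracD tofracM tc; apply/eqP.
  have := congr1 (fun z => z * x ^+ n) e2; rewrite mul0r mulrDl -mulrA /y mulVf // mulr1.
  by [].
have r1z : r`_1 = - (r`_0 * c) by apply/eqP; rewrite -addr_eq0 addrC e3.
have r0z : r`_0 = 0.
  have : r`_0 * (1 - c * c) = 0 by rewrite -[RHS]e1 r1z; ring.
  move/eqP; rewrite mulf_eq0 => /orP [/eqP // | h]; exfalso; move: h.
  by rewrite subr_eq0 eq_sym /c -exprD (negbTE (Xn_neq1 _)) // addn_gt0 n0.
have r1z' : r`_1 = 0 by rewrite r1z r0z mul0r oppr0.
have rz : r = 0.
  apply/polyP => i; rewrite coef0; case: i => [|[|i]]; [exact: r0z | exact: r1z' |].
  by apply: nth_default; apply: leq_trans sr _.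
move: hr; rewrite rz addr0 => hQ.
have cc0 : cc != 0 by rewrite expf_neq0 // lead_coef_eq0.
set E := Eq m s ('X : {poly rat}).
have tE : tofrac E = Eq m s x by rewrite (@EqM2 _ _ (@tofrac {poly rat}) (@tofrac {poly rat})).
have E0 : E != 0 by rewrite -tofrac_eq0 tE; exact: Eq_neq0 x0 hx.
have Dform : D = avar ^+ (m + s) * E%:P.
  by rewrite /E (@EqM2 _ _ (@polyC {poly rat}) (@polyC {poly rat})).
have DN0 : D != 0 by rewrite -tofrac_eq0.
exists Q, (cc%:P * D); split; [|split].
- by rewrite mulf_neq0 // polyC_eq0.
- rewrite Dform mulrCA -polyCM.
  by have := @cop n (m + s) (cc * E) (mulf_neq0 cc0 E0); rewrite qc.
- transitivity (tofrac N / tofrac D); first exact: (esym Hd).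
  rewrite [P * Q]mulrC -hQ -mul_polyC (tofracM (cc%:P) N) (tofracM (cc%:P) D).
  have h1 : tofrac (cc%:P : Pol) != 0 by rewrite tofrac_eq0 polyC_eq0.
  move: h1 D0; move: (tofrac (cc%:P : Pol)) (tofrac D) (tofrac N) => T1 T2 T3 h1 h2.
  by rewrite invfM mulrACA mulfV // mul1r.
Qed.
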